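(* Let $\mathcal{A}$ be an abelian category and $\xi\colon 0\to K\to X\xrightarrow{\alpha}Y\to 0$ a short exact sequence. The following are equivalent: (1) $\alpha$ is right minimal; (2) every endomorphism $u\colon K\to K$ with $[\xi]=[u.\xi]$ is an automorphism; (3) the connecting map $c(\xi,K)\colon\mathrm{Hom}_{\mathcal{A}}(K,K)\to\mathrm{Ext}^1_{\mathcal{A}}(Y,K)$ is a right minimal morphism of $\Gamma(K)$-modules.
   Context: A morphism $\alpha\colon X\to Y$ is right minimal if every endomorphism $u\colon X\to X$ with $\alpha=\alpha\circ u$ is an automorphism (same definition in any category, e.g. of modules). $u.\xi$ is the pushout of $\xi$ along $u$; $c(\xi,K)$ sends $u$ to $[u.\xi]$. $\Gamma(K)=\mathrm{End}_{\mathcal{A}}(K)$. *)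

(* Defs.v *)
From HB Require Import structures.
From mathcomp Require Import all_boot all_algebra.
Set Implicit Arguments. Unset Strict Implicit. Unset Printing Implicit Defensive.
Import GRing.Theory.
Local Open Scope ring_scope.

Record preadd := PreAdd {
  obj : Type;
  mor : obj -> obj -> zmodType;
  cmp : forall a b c : obj, mor b c -> mor a b -> mor a c;
  idm : forall a : obj, mor a a;
  cmpA : forall (a b c d : obj) (h : mor c d) (g : mor b c) (f : mor a b),
    cmp h (cmp g f) = cmp (cmp h g) f;
  cmp1f : forall (a b : obj) (f : mor a b), cmp (idm b) f = f;
  cmpf1 : forall (a b : obj) (f : mor a b), cmp f (idm a) = f;
  cmpDl : forall (a b c : obj) (g1 g2 : mor b c) (f : mor a b),
    cmp (g1 + g2) f = cmp g1 f + cmp g2 f;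
  cmpDr : forall (a b c : obj) (g : mor b c) (f1 f2 : mor a b),
    cmp g (f1 + f2) = cmp g f1 + cmp g f2
}.
Arguments cmp {p a b c}.
Arguments idm {p}.
Arguments mor : clear implicits.

Section Defs.
Variable C : preadd.
Local Notation Hom := (mor C).

Definition mono (a b : obj C) (f : Hom a b) :=
  forall (t : obj C) (g h : Hom t a), cmp f g = cmp f h -> g = h.
Definition epi (a b : obj C) (f : Hom a b) :=
  forall (t : obj C) (g h : Hom b t), cmp g f = cmp h f -> g = h.
Definition iso (a b : obj C) (f : Hom a b) :=
  exists g : Hom b a, cmp g f = idm a /\ cmp f g = idm b.

Definition is_zero_obj (z : obj C) :=
  (forall (a : obj C) (f : Hom z a), f = 0) /\ (forall (a : obj C) (f : Hom a z), f = 0).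

Definition is_kernel (A B K : obj C) (f : Hom A B) (k : Hom K A) :=
  cmp f k = 0 /\
  forall (T : obj C) (g : Hom T A), cmp f g = 0 ->
    exists! h : Hom T K, cmp k h = g.

Definition is_cokernel (A B Q : obj C) (f : Hom A B) (q : Hom B Q) :=
  cmp q f = 0 /\
  forall (T : obj C) (g : Hom B T), cmp g f = 0 ->
    exists! h : Hom Q T, cmp h q = g.

Definition is_biproduct (a b s : obj C) (i1 : Hom a s) (i2 : Hom b s)
    (p1 : Hom s a) (p2 : Hom s b) :=
  [/\ cmp p1 i1 = idm a, cmp p2 i2 = idm b, cmp p1 i2 = 0, cmp p2 i1 = 0
    & cmp i1 p1 + cmp i2 p2 = idm s].

Definition abelian :=
  (exists z : obj C, is_zero_obj z) /\
  [/\ (forall a b : obj C, exists s (i1 : Hom a s) (i2 : Hom b s)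
        (p1 : Hom s a) (p2 : Hom s b), is_biproduct i1 i2 p1 p2),
      (forall (a b : obj C) (f : Hom a b), exists K (k : Hom K a), is_kernel f k),
      (forall (a b : obj C) (f : Hom a b), exists Q (q : Hom b Q), is_cokernel f q),
      (forall (a b : obj C) (f : Hom a b), mono f ->
        exists c (g : Hom b c), is_kernel g f)
    & (forall (a b : obj C) (f : Hom a b), epi f ->
        exists c (g : Hom c a), is_cokernel g f)].

Definition ses (K X Y : obj C) (i : Hom K X) (p : Hom X Y) :=
  is_kernel p i /\ is_cokernel i p.

Definition right_minimal (X Y : obj C) (f : Hom X Y) :=
  forall u : Hom X X, cmp f u = f -> iso u.

Record extension (K Y : obj C) := Extension {
  ext_mid : obj C;
  ext_in : Hom K ext_mid;
  ext_out : Hom ext_mid Y;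
  ext_ses : ses ext_in ext_out
}.

(* Yoneda equivalence of extensions (equality of classes in Ext^1(Y,K)) *)
Definition yequiv (K Y : obj C) (e1 e2 : extension K Y) :=
  exists phi : Hom (ext_mid e1) (ext_mid e2),
    cmp phi (ext_in e1) = ext_in e2 /\ cmp (ext_out e2) phi = ext_out e1.

Definition is_pushout_ext (K Y : obj C) (xi : extension K Y) (u : Hom K K)
    (eta : extension K Y) :=
  exists w : Hom (ext_mid xi) (ext_mid eta),
    [/\ cmp (ext_in eta) u = cmp w (ext_in xi),
        cmp (ext_out eta) w = ext_out xi
      & (forall (T : obj C) (a : Hom K T) (b : Hom (ext_mid xi) T),
          cmp a u = cmp b (ext_in xi) ->
          exists! h : Hom (ext_mid eta) T,
            cmp h (ext_in eta) = a /\ cmp h w = b)].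

(* [u.xi] = [v.xi] in Ext^1(Y,K), i.e. c(xi,K) u = c(xi,K) v *)
Definition conn_eq (K Y : obj C) (xi : extension K Y) (u v : Hom K K) :=
  exists eta eta' : extension K Y,
    [/\ is_pushout_ext xi u eta, is_pushout_ext xi v eta' & yequiv eta eta'].

(* Gamma(K)-linear endomorphisms of the regular module Hom(K,K)
   (Gamma(K) = End(K) acting by post-composition). *)
Definition gamma_linear (K : obj C) (phi : Hom K K -> Hom K K) :=
  (forall f g : Hom K K, phi (f + g) = phi f + phi g) /\
  (forall u f : Hom K K, phi (cmp u f) = cmp u (phi f)).

(* c(xi,K) : Hom(K,K) -> Ext^1(Y,K) is right minimal as a morphism of
   Gamma(K)-modules: every Gamma(K)-endomorphism phi of Hom(K,K) with
   c o phi = c is an automorphism. *)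
Definition conn_right_minimal (K Y : obj C) (xi : extension K Y) :=
  forall phi : Hom K K -> Hom K K, gamma_linear phi ->
    (forall f : Hom K K, conn_eq xi (phi f) f) -> bijective phi.

End Defs.

(* Main.v *)
Require Import Defs.
From mathcomp Require Import all_boot all_algebra.
Set Implicit Arguments. Unset Strict Implicit. Unset Printing Implicit Defensive.
Import GRing.Theory.
Local Open Scope ring_scope.

Section Aux.
Variable C : preadd.
Local Notation Hom := (mor C).

Lemma cmp0r (a b c : obj C) (g : Hom b c) : cmp g (0 : Hom a b) = 0.
Proof.
have H := cmpDr g (0 : Hom a b) 0; rewrite addr0 in H.
by apply: (addrI (cmp g 0)); rewrite addr0 -H.
Qed.

Lemma cmp0l (a b c : obj C) (f : Hom a b) : cmp (0 : Hom b c) f = 0.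
Proof.
have H := cmpDl (0 : Hom b c) 0 f; rewrite addr0 in H.
by apply: (addrI (cmp 0 f)); rewrite addr0 -H.
Qed.

Lemma cmpNr (a b c : obj C) (g : Hom b c) (f : Hom a b) : cmp g (- f) = - cmp g f.
Proof. by apply: (addrI (cmp g f)); rewrite -cmpDr !subrr cmp0r. Qed.

Lemma cmpNl (a b c : obj C) (g : Hom b c) (f : Hom a b) : cmp (- g) f = - cmp g f.
Proof. by apply: (addrI (cmp g f)); rewrite -cmpDl !subrr cmp0l. Qed.

Lemma cmpBr (a b c : obj C) (g : Hom b c) (f1 f2 : Hom a b) :
  cmp g (f1 - f2) = cmp g f1 - cmp g f2.
Proof. by rewrite cmpDr cmpNr. Qed.

Lemma cmpBl (a b c : obj C) (g1 g2 : Hom b c) (f : Hom a b) :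
  cmp (g1 - g2) f = cmp g1 f - cmp g2 f.
Proof. by rewrite cmpDl cmpNl. Qed.

Lemma uniq2 (T : Type) (P : T -> Prop) x y : (exists! h, P h) -> P x -> P y -> x = y.
Proof. by case=> h [_ U] Px Py; rewrite -(U x Px) (U y Py). Qed.

Lemma ker_mono (A B K : obj C) (f : Hom A B) (k : Hom K A) : is_kernel f k -> mono k.
Proof.
move=> [fk0 Hk] T g h Hgh.
have Hg : cmp f (cmp k g) = 0 by rewrite cmpA fk0 cmp0l.
exact: (uniq2 (Hk T _ Hg)).
Qed.

Lemma coker_epi (A B Q : obj C) (f : Hom A B) (q : Hom B Q) : is_cokernel f q -> epi q.
Proof.
move=> [qf0 Hq] T g h Hgh.
have Hg : cmp (cmp g q) f = 0 by rewrite -cmpA qf0 cmp0r.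
exact: (uniq2 (Hq T _ Hg)).
Qed.

Lemma mono0 (a b t : obj C) (k : Hom a b) (g : Hom t a) : mono k -> cmp k g = 0 -> g = 0.
Proof. by move=> Hm H; apply: Hm; rewrite H cmp0r. Qed.

Lemma epi0 (a b t : obj C) (k : Hom a b) (g : Hom b t) : epi k -> cmp g k = 0 -> g = 0.
Proof. by move=> Hm H; apply: Hm; rewrite H cmp0l. Qed.

Lemma ses_zero (K X Y : obj C) (i : Hom K X) (p : Hom X Y) : ses i p -> cmp p i = 0.
Proof. by case=> [[]]. Qed.

Lemma yequiv_trans (K Y : obj C) (e1 e2 e3 : extension K Y) :
  yequiv e1 e2 -> yequiv e2 e3 -> yequiv e1 e3.
Proof.
move=> [f [f1 f2]] [g [g1 g2]]; exists (cmp g f); split.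
  by rewrite -cmpA f1.
by rewrite cmpA g2.
Qed.

End Aux.

Section Aux2.
Variable C : preadd.
Local Notation Hom := (mor C).

Lemma iso_restr (K X Y : obj C) (i : Hom K X) (al : Hom X Y) (w : Hom X X) (u : Hom K K) :
  ses i al -> cmp w i = cmp i u -> cmp al w = al -> iso w -> iso u.
Proof.
move=> [[ai0 Hk] Hc] Hwi Hal [v [vw wv]].
have im := ker_mono (conj ai0 Hk).
have Hv : cmp al v = al by rewrite -{1}Hal -cmpA wv cmpf1.
have H0 : cmp al (cmp v i) = 0 by rewrite cmpA Hv ai0.
case: (Hk _ _ H0) => u' [Hu' _].
exists u'; split; apply: im.
  by rewrite cmpA Hu' -cmpA -Hwi cmpA vw cmp1f cmpf1.
by rewrite cmpA -Hwi -cmpA Hu' cmpA wv cmp1f cmpf1.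
Qed.

Lemma seq_pushout (K Y : obj C) (xi : extension K Y) (u : Hom K K)
  (w : Hom (ext_mid xi) (ext_mid xi)) :
  cmp w (ext_in xi) = cmp (ext_in xi) u -> cmp (ext_out xi) w = ext_out xi ->
  (forall (T : obj C) (a : Hom K T) (b : Hom (ext_mid xi) T),
          cmp a u = cmp b (ext_in xi) ->
          exists! h : Hom (ext_mid xi) T,
            cmp h (ext_in xi) = a /\ cmp h w = b).
Proof.
case: xi w => X i al [[ai0 Hk] Hc] /= w Hwi Hal.
have im := ker_mono (conj ai0 Hk).
move=> T a b Hab.
have H0 : cmp al (idm X - w) = 0 by rewrite cmpBr cmpf1 Hal subrr.
case: (Hk _ _ H0) => d [Hd _].
have Hw : w = idm X - cmp i d by rewrite Hd opprB addrC subrK.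
have Hdi : cmp d i = idm K - u.
  by apply: im; rewrite cmpA Hd cmpBl cmpBr cmp1f cmpf1 Hwi.
have Hhi : cmp (b + cmp a d) i = a.
  by rewrite cmpDl -cmpA Hdi cmpBr cmpf1 Hab addrC subrK.
exists (b + cmp a d); split; first split => //.
  by rewrite Hw cmpBr cmpf1 cmpA Hhi addrK.
move=> h' [H1 H2].
by rewrite -[h' in RHS]cmpf1 -(subrK w (idm X)) -Hd cmpDr H2 cmpA H1 addrC.
Qed.

Lemma one_two (K Y : obj C) (xi : extension K Y) :
  right_minimal (ext_out xi) <->
  (forall u : Hom K K, (exists eta, is_pushout_ext xi u eta /\ yequiv eta xi) -> iso u).
Proof.
split.
  move=> RM u [eta [[w [H1 H2 H3]] [ph [Hp1 Hp2]]]].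
  apply: (@iso_restr _ _ _ (ext_in xi) (ext_out xi) (cmp ph w)); first exact: ext_ses.
  - by rewrite -cmpA -H1 cmpA Hp1.
  - by rewrite cmpA Hp2 H2.
  apply: RM; by rewrite cmpA Hp2 H2.
move=> P2 w Hal.
case: (ext_ses xi) => [[ai0 Hk] Hc].
have H0 : cmp (ext_out xi) (cmp w (ext_in xi)) = 0 by rewrite cmpA Hal ai0.
case: (Hk _ _ H0) => u [Hu _].
have U := seq_pushout (esym Hu) Hal.
have [u' [u'u uu']] : iso u.
  apply: P2; exists xi; split; last exists (idm _).
    by exists w; split; [exact: Hu|exact: Hal|exact: U].
  split; [exact: cmp1f|exact: cmpf1].
have Hc1 : cmp (cmp (ext_in xi) u') u = cmp (idm _) (ext_in xi).
  by rewrite -cmpA u'u cmpf1 cmp1f.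
case: (U _ _ _ Hc1) => h [[h1 h2] _].
exists h; split => //.
have Hc2 : cmp (ext_in xi) u = cmp w (ext_in xi) by [].
apply: (uniq2 (U _ _ _ Hc2)); split.
- by rewrite -cmpA h1 cmpA -Hu -cmpA uu' cmpf1.
- by rewrite -cmpA h2 cmpf1.
- by rewrite cmp1f.
- by rewrite cmp1f.
Qed.

End Aux2.

Section Aux3.
Variable C : preadd.
Local Notation Hom := (mor C).
Hypothesis HC : abelian C.

Lemma cmpA3 (a b c d e : obj C) (x : Hom d e) (y : Hom c d) (z : Hom b c) (t : Hom a b) :
  cmp (cmp x y) (cmp z t) = cmp x (cmp (cmp y z) t).
Proof. by rewrite -!cmpA. Qed.

Lemma pushout_exists (K Y : obj C) (xi : extension K Y) (f : Hom K K) :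
  exists eta, is_pushout_ext xi f eta.
Proof.
case: HC => _ [Hbi Hker Hcok Hmk Hek].
case: xi => X i al [[ai0 Hk] Hc] /=.
have im := ker_mono (conj ai0 Hk).
have ale := coker_epi Hc.
case: (Hbi K X) => s [j1 [j2 [p1 [p2 [pj1 pj2 p1j2 p2j1 jp]]]]].
have split_s : forall T (t : Hom s T), t = cmp (cmp t j1) p1 + cmp (cmp t j2) p2.
  by move=> T t; rewrite -!cmpA -cmpDr jp cmpf1.
pose g := cmp j1 f - cmp j2 i.
have p2g : cmp p2 g = - i by rewrite cmpBr !cmpA pj2 p2j1 cmp0l cmp1f sub0r.
have gm : mono g.
  move=> T x y H; apply: im; apply: oppr_inj.
  by rewrite -!cmpNl -p2g -!cmpA H.
case: (Hcok _ _ g) => Q [q [qg Hq]].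
have qe := coker_epi (conj qg Hq).
case: (Hmk _ _ g gm) => Z [c [cg Hcg]].
have kerq : forall T (x : Hom T s), cmp q x = 0 -> exists y, cmp g y = x.
  move=> T x qx; case: (Hq _ _ cg) => c' [Hc' _].
  have : cmp c x = 0 by rewrite -Hc' -cmpA qx cmp0r.
  by case/(Hcg _ _) => y [Hy _]; exists y.
pose i' := cmp q j1; pose w := cmp q j2.
have Hal0 : cmp (cmp al p2) g = 0 by rewrite -cmpA p2g cmpNr ai0 oppr0.
case: (Hq _ _ Hal0) => al' [Hal' _].
have al'w : cmp al' w = al by rewrite /w cmpA Hal' -cmpA pj2 cmpf1.
have al'e : epi al'.
  by move=> T x y H; apply: ale; rewrite -al'w !cmpA H.
have al'i' : cmp al' i' = 0 by rewrite /i' cmpA Hal' -cmpA p2j1 cmp0r.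
have i'm : mono i'.
  move=> T x y H.
  have : cmp q (cmp j1 (x - y)) = 0 by rewrite cmpA cmpBr H subrr.
  case/kerq => z Hz.
  have : cmp i z = 0.
    apply: oppr_inj; rewrite oppr0 -cmpNl -p2g -cmpA Hz cmpA p2j1 cmp0l //.
  move/(mono0 im) => z0; move: Hz; rewrite z0 cmp0r => /esym H2.
  apply/eqP; rewrite -subr_eq0; apply/eqP.
  by rewrite -[x - y]cmp1f -pj1 -cmpA H2 cmp0r.
have Hcok' : is_cokernel i' al'.
  split; first exact: al'i'.
  move=> T t ti'.
  have tw0 : cmp (cmp t w) i = 0.
    have : cmp j2 i = cmp j1 f - g by rewrite /g opprB addrC subrK.
    rewrite /w -!cmpA => ->; rewrite cmpBr !cmpA.
    by rewrite qg subr0 cmpA -/i' ti' cmp0l.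
  case: Hc => _ Hc; case: (Hc _ _ tw0) => h [Hh _].
  have Hh2 : cmp h al' = t.
    apply: qe; rewrite -cmpA Hal' cmpA Hh.
    by rewrite [in RHS](split_s _ (cmp t q)) -(@cmpA _ _ _ _ _ t q j1) -/i' ti' cmp0l add0r -(@cmpA _ _ _ _ _ t q j2).
  exists h; split => // h' Hh'; apply: al'e; by rewrite Hh' Hh2.
have Hker' : is_kernel al' i'.
  split; first exact: al'i'.
  move=> T x Hx.
  case: (Hmk _ _ _ i'm) => Z0 [c0 [c0i Hc0]].
  case: Hcok' => _ /(_ _ _ c0i) [c1 [Hc1 _]].
  have : cmp c0 x = 0 by rewrite -Hc1 -cmpA Hx cmp0r.
  case/(Hc0 _ _) => y [Hy _]; exists y; split => // y' Hy'.
  by apply: i'm; rewrite Hy Hy'.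
exists (Extension (conj Hker' Hcok')); exists w; split => /=.
- apply/eqP; rewrite -subr_eq0 /i' /w -!cmpA -cmpBr -/g qg //.
- exact: al'w.
move=> T a b Hab.
have H0 : cmp (cmp a p1 + cmp b p2) g = 0.
  rewrite /g cmpBr !cmpDl !cmpA3 pj1 p2j1 p1j2 pj2 !cmp0l !cmp0r !cmp1f.
  by rewrite addr0 add0r Hab subrr.
case: (Hq _ _ H0) => h [Hh U].
exists h; split.
  by rewrite /i' /w !cmpA Hh !cmpDl -!cmpA pj1 p2j1 p1j2 pj2 !cmp0r !cmpf1 addr0 add0r.
move=> h' [H1 H2]; apply: U.
by rewrite [in LHS](split_s _ (cmp h' q)) -!(@cmpA _ _ _ _ _ h' q) -/i' -/w H1 H2.
Qed.

End Aux3.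

Section Aux4.
Variable C : preadd.
Local Notation Hom := (mor C).

Lemma push1_yequiv (K Y : obj C) (xi eta : extension K Y) :
  is_pushout_ext xi (idm K) eta -> yequiv eta xi.
Proof.
move=> [w [A B U]].
have H1 : cmp (ext_in xi) (idm K) = cmp (idm _) (ext_in xi) by rewrite cmp1f cmpf1.
case: (U _ _ _ H1) => h [[h1 h2] _].
exists h; split => //.
have H2 : cmp (0 : Hom K Y) (idm K) = cmp (ext_out xi) (ext_in xi).
  by rewrite cmp0l (ses_zero (ext_ses xi)).
apply: (uniq2 (U _ _ _ H2)); split.
- by rewrite -cmpA h1 (ses_zero (ext_ses xi)).
- by rewrite -cmpA h2 cmpf1.
- exact: (ses_zero (ext_ses eta)).
- exact: B.
Qed.

Lemma push_comp_yequiv (K Y : obj C) (xi e1 e2 : extension K Y) (f u : Hom K K) :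
  is_pushout_ext xi (cmp f u) e1 -> is_pushout_ext xi f e2 ->
  (exists eta, is_pushout_ext xi u eta /\ yequiv eta xi) -> yequiv e1 e2.
Proof.
move=> [w1 [A1 B1 U1]] [w2 [A2 B2 U2]] [e0 [[w0 [A0 B0 U0]] [ps [P1 P2]]]].
have Hc : cmp (ext_in e2) (cmp f u) = cmp (cmp w2 (cmp ps w0)) (ext_in xi).
  by rewrite cmpA A2 -!cmpA -A0 (cmpA ps) P1.
case: (U1 _ _ _ Hc) => h [[h1 h2] _].
exists h; split => //.
have H2 : cmp (0 : Hom K Y) (cmp f u) = cmp (ext_out xi) (ext_in xi).
  by rewrite cmp0l (ses_zero (ext_ses xi)).
apply: (uniq2 (U1 _ _ _ H2)); split.
- by rewrite -cmpA h1 (ses_zero (ext_ses e2)).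
- by rewrite -cmpA h2 cmpA B2 cmpA P2 B0.
- exact: (ses_zero (ext_ses e1)).
- exact: B1.
Qed.

Lemma two_three (HC : abelian C) (K Y : obj C) (xi : extension K Y) :
  (forall u : Hom K K, (exists eta, is_pushout_ext xi u eta /\ yequiv eta xi) -> iso u) <->
  conn_right_minimal xi.
Proof.
split.
  move=> P2 phi [Hadd Hmul] Hc.
  pose v := phi (idm K).
  have Hphi : forall g, phi g = cmp g v by move=> g; rewrite -{1}(cmpf1 g) Hmul.
  case: (Hc (idm K)) => eta [eta' [Pe Pe' Ye]].
  have [v' [v'v vv']] : iso v.
    apply: P2; exists eta; split => //.
    exact: (yequiv_trans Ye (push1_yequiv Pe')).
  exists (fun g => cmp g v') => g; rewrite Hphi.
    by rewrite -cmpA vv' cmpf1.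
  by rewrite -cmpA v'v cmpf1.
move=> CRM u Hex.
have [g gK Kg] : bijective (fun f : Hom K K => cmp f u).
  apply: CRM.
    by split => [f g|u' f]; rewrite ?cmpDl ?cmpA.
  move=> f.
  case: (pushout_exists HC xi (cmp f u)) => e1 P1.
  case: (pushout_exists HC xi f) => e2 P2.
  exists e1, e2; split => //.
  exact: (push_comp_yequiv P1 P2 Hex).
exists (g (idm K)); split; first exact: Kg.
apply: (can_inj gK) => /=.
by rewrite -cmpA Kg cmpf1 cmp1f.
Qed.

End Aux4.

Theorem lemma3p1 (C : preadd) (HC : abelian C) (K X Y : obj C)
    (i : mor C K X) (alpha : mor C X Y) (Hxi : ses i alpha) :
  let xi := Extension Hxi in
  (right_minimal alpha <->
     (forall u : mor C K K, (exists eta, is_pushout_ext xi u eta /\ yequiv eta xi) -> iso u))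
  /\
  ((forall u : mor C K K, (exists eta, is_pushout_ext xi u eta /\ yequiv eta xi) -> iso u) <->
     conn_right_minimal xi).
Proof.
move=> xi; split; first exact: (one_two xi).
exact: (two_three HC xi).
Qed.
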